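(* Let $M$ be a finite $\mathscr R$-trivial monoid and $m\in M$. Then the idempotents of $\widetilde L_m$ are exactly the elements of the minimal ideal of $\mathrm{St}_R(m)$, and this set is moreover an $\mathscr L$-class of $M$.
   Context: $M$ is $\mathscr R$-trivial if $mM=nM$ implies $m=n$. $\mathrm{St}_R(m)=\{n\in M: mn=m\}$ (a submonoid). Define $m\le_{\widetilde{\mathscr L}}n$ if for every idempotent $e$, $ne=n$ implies $me=m$; $m\mathrel{\widetilde{\mathscr L}}n$ if $m\le_{\widetilde{\mathscr L}}n$ and $n\le_{\widetilde{\mathscr L}}m$; $\widetilde L_m$ is the $\widetilde{\mathscr L}$-class of $m$. An $\mathscr L$-class of $M$ is a set $\{n: Mn=Mx\}$ for some $x\in M$. *)

(* Defs.v *)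
(* A finite monoid is a finType T with an operation mul and
   unit one, satisfying the monoid axioms (given as hypotheses). *)
From mathcomp Require Import all_boot.
Set Implicit Arguments. Unset Strict Implicit. Unset Printing Implicit Defensive.

Section MonoidDefs.
Variables (T : finType) (mul : T -> T -> T).

Definition rideal (m : T) : {set T} := [set mul m x | x : T].
Definition lideal (m : T) : {set T} := [set mul x m | x : T].

Definition R_trivial : Prop := forall m n : T, rideal m = rideal n -> m = n.

Definition StR (m : T) : {set T} := [set n | mul m n == m].

Definition idempotent_elt (e : T) : bool := mul e e == e.

Definition leLt (m n : T) : bool :=
  [forall e, idempotent_elt e ==> (mul n e == n) ==> (mul m e == m)].
Definition Lt (m n : T) : bool := leLt m n && leLt n m.
Definition Lt_class (m : T) : {set T} := [set n | Lt n m].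

Definition is_ideal_of (S I : {set T}) : bool :=
  [&& I \subset S, I != set0 &
      [forall s in S, forall x in I, (mul s x \in I) && (mul x s \in I)]].

(* the minimal ideal of S: intersection of all ideals of S
   (for a finite monoid S this is the unique minimal ideal) *)
Definition min_ideal (S : {set T}) : {set T} :=
  \bigcap_(I : {set T} | is_ideal_of S I) I.

Definition L_class (x : T) : {set T} := [set n | lideal n == lideal x].

End MonoidDefs.

(* Main.v *)
Require Import Defs.
From mathcomp Require Import all_boot.

Section Proof.
Variables (T : finType) (mul : T -> T -> T) (one : T)
    (mulA : associative mul) (mul1m : left_id one mul) (mulm1 : right_id one mul)
    (HR : R_trivial mul).

Lemma in_r x u : mul x u \in rideal mul x.
Proof. by apply/imsetP; exists u. Qed.
Lemma in_l x u : mul u x \in lideal mul x.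
Proof. by apply/imsetP; exists u. Qed.

Lemma rideal_sub x y : rideal mul (mul x y) \subset rideal mul x.
Proof.
apply/subsetP => t /imsetP [u _ ->]; rewrite -mulA; exact: in_r.
Qed.

Lemma rideal_eq x y c : x = mul (mul x y) c -> mul x y = x.
Proof.
move=> Hx; apply: HR; apply/eqP; rewrite eqEsubset rideal_sub /=.
apply/subsetP => t /imsetP [u _ ->]; rewrite {1}Hx -mulA; exact: in_r.
Qed.

Lemma lideal_eq x y c d : x = mul c y -> y = mul d x -> lideal mul x = lideal mul y.
Proof.
move=> Hx Hy; apply/setP => t; apply/imsetP/imsetP => [[u _ ->]|[u _ ->]].
  by exists (mul u c) => //; rewrite Hx mulA.
by exists (mul u d) => //; rewrite Hy mulA.
Qed.

Lemma in_lideal x y : x \in lideal mul y -> exists a, x = mul a y.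
Proof. by move=> /imsetP [u _ ->]; exists u. Qed.

Variable m : T.

Definition Z := [set k | (mul m k == m) && [forall s, (mul m s == m) ==> (mul k s == k)]].

Lemma inZ k : k \in Z -> mul m k = m /\ forall s, mul m s = m -> mul k s = k.
Proof.
rewrite inE => /andP [/eqP H1 /forallP H2]; split => // s Hs.
by move/implyP: (H2 s) => /(_ (introT eqP Hs)) /eqP.
Qed.

Lemma Zin k : mul m k = m -> (forall s, mul m s = m -> mul k s = k) -> k \in Z.
Proof.
move=> H1 H2; rewrite inE H1 eqxx /=; apply/forallP => s; apply/implyP => /eqP Hs.
by rewrite H2.
Qed.

Lemma Zex_gen n a : #|rideal mul a| <= n -> mul m a = m -> exists z, z \in Z.
Proof.
elim: n a => [|n IH] a Hc Ha.
  have Ha' : a \in rideal mul a by rewrite -{1}[a]mulm1; apply: in_r.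
  by move: Hc; rewrite leqn0 cards_eq0 => /eqP Hc; rewrite Hc inE in Ha'.
case: (boolP [forall s, (mul m s == m) ==> (mul a s == a)]) => Hf.
  by exists a; rewrite inE Ha eqxx.
move/forallPn: Hf => [s]; rewrite negb_imply => /andP [/eqP Hs Hne].
apply: (IH (mul a s)); last by rewrite mulA Ha Hs.
have Hp : rideal mul (mul a s) \proper rideal mul a.
  rewrite properEneq rideal_sub andbT; apply/negP => /eqP /HR H.
  by rewrite H eqxx in Hne.
by move: (proper_card Hp) => H; rewrite -ltnS; apply: leq_trans Hc.
Qed.

Lemma Zex : exists z, z \in Z.
Proof. by apply: (@Zex_gen #|rideal mul one| one) => //. Qed.

Lemma min_ideal_Z : min_ideal mul (StR mul m) = Z.
Proof.
have HZ : is_ideal_of mul (StR mul m) Z.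
  apply/and3P; split.
  - by apply/subsetP => k /inZ [H _]; rewrite inE H.
  - by case: Zex => z Hz; apply/set0Pn; exists z.
  - apply/forall_inP => s; rewrite inE => /eqP Hs; apply/forall_inP => x /inZ [Hx1 Hx2].
    apply/andP; split; apply: Zin.
    + by rewrite mulA Hs.
    + move=> t Ht; rewrite -mulA Hx2 //.
    + by rewrite mulA Hx1.
    + move=> t Ht; rewrite Hx2 //; exact: Hx2.
apply/eqP; rewrite eqEsubset; apply/andP; split.
  exact: (bigcap_inf Z HZ).
apply/bigcapsP => I /and3P [HIS HI0 /forall_inP HI].
apply/subsetP => z /inZ [Hz1 Hz2].
case/set0Pn: HI0 => i Hi.
have Hi' := subsetP HIS i Hi; rewrite inE in Hi'; move/eqP: Hi' => Hi'.
have := HI z; rewrite inE Hz1 eqxx => /(_ isT) /forall_inP /(_ i Hi) /andP [H _].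
by rewrite Hz2 in H.
Qed.

Lemma idem_Lt_Z e : (e \in Lt_class mul m) && idempotent_elt mul e = (e \in Z).
Proof.
apply/idP/idP.
- case/andP; rewrite inE => /andP [H1 H2] /eqP He.
  move/forallP: H2 => /(_ e); rewrite /idempotent_elt He eqxx /= => /eqP Hme.
  apply: Zin => // s Hs.
  case: Zex => z /inZ [Hz1 Hz2].
  have Hzz : mul z z = z by apply: Hz2.
  move/forallP: H1 => /(_ z); rewrite /idempotent_elt Hzz eqxx /= Hz1 eqxx /= => /eqP Hez.
  by rewrite -Hez -mulA Hz2.
- move=> /inZ [H1 H2]; rewrite /idempotent_elt H2 // eqxx andbT inE.
  apply/andP; split; apply/forallP => f; apply/implyP => /eqP Hf; apply/implyP => /eqP H.
  + by rewrite H2.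
  + by rewrite -{1}H1 -mulA H H1.
Qed.

Lemma L_class_Z z : z \in Z -> L_class mul z = Z.
Proof.
move=> /inZ [Hz1 Hz2].
apply/setP => n; rewrite inE; apply/idP/idP.
- move/eqP => Hl.
  have : n \in lideal mul z by rewrite -Hl -{1}[n]mul1m; apply: in_l.
  move=> /in_lideal [a Ha].
  have : z \in lideal mul n by rewrite Hl -{1}[z]mul1m; apply: in_l.
  move=> /in_lideal [b Hb].
  have Hzz : mul z z = z by apply: Hz2.
  have Hnz : mul n z = n by rewrite Ha -mulA Hzz.
  have Hnbn : n = mul (mul n b) n by rewrite -mulA -Hb Hnz.
  have Hnb : mul n b = n := @rideal_eq _ _ _ Hnbn.
  have Hnn : mul n n = n by rewrite {3}Hnbn Hnb.
  have Hzn : mul z n = z by rewrite Hb -mulA Hnn.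
  apply: Zin.
  + by rewrite -Hz1 -mulA Hzn.
  + by move=> s Hs; rewrite Ha -mulA Hz2.
- move=> /inZ [Hn1 Hn2]; apply/eqP.
  apply: (@lideal_eq _ _ n z); [by rewrite Hn2 | by rewrite Hz2].
Qed.

End Proof.

Theorem mainTheorem20 (T : finType) (mul : T -> T -> T) (one : T)
    (mulA : associative mul) (mul1m : left_id one mul) (mulm1 : right_id one mul)
    (HR : R_trivial mul) (m : T) :
  [set e in Lt_class mul m | idempotent_elt mul e] = min_ideal mul (StR mul m)
  /\ exists x : T, min_ideal mul (StR mul m) = L_class mul x.
Proof.
rewrite (min_ideal_Z _ _ _ mulA mulm1 HR m); split.
  by apply/setP => e; rewrite inE (idem_Lt_Z _ _ _ mulA mulm1 HR).
case: (Zex _ _ _ mulA mulm1 HR m) => z Hz; exists z.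
by rewrite (L_class_Z _ _ _ mulA mul1m HR _ _ Hz).
Qed.
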